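(* Let $C$ be a matrix satisfying the dominance condition and let $C'$ be a submatrix of $C$ (obtained by selecting a subset of rows and a subset of columns) such that every column of $C'$ contains an entry equal to $1$ and every row of $C'$ contains at most one entry equal to $1$. Then, in each row of $C'$, the sum of the entries different from $1$ is less than $1$.
   Context: A matrix $C_1$ covers $C_2$ if $C_1-C_2$ is entrywise nonnegative. A matrix is columnwise normal if its entries lie in $[0,1]$ and every column has at least one entry equal to $1$. A columnwise normal matrix with $n$ rows satisfies the dominance condition if (a) there is an $n\times n$ submatrix (formed by $n$ of its columns) covering a permutation matrix, and (b) for every $n\times n$ such submatrix covering a permutation matrix, the sum of each row is less than $2$. *)

(* Defs.v *)
From mathcomp Require Import all_boot all_order all_algebra all_fingroup.
Set Implicit Arguments. Unset Strict Implicit. Unset Printing Implicit Defensive.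
Import Order.TTheory GRing.Theory Num.Theory.
Local Open Scope ring_scope.

Definition covers (R : numDomainType) m n (C1 C2 : 'M[R]_(m, n)) : Prop :=
  forall i j, 0 <= (C1 - C2) i j.

Definition columnwise_normal (R : numDomainType) m n (C : 'M[R]_(m, n)) : Prop :=
  (forall i j, 0 <= C i j <= 1) /\ (forall j, exists i, C i j = 1).

Definition covers_perm (R : numDomainType) n m (C : 'M[R]_(n, m)) (f : 'I_n -> 'I_m) : Prop :=
  injective f /\ exists s : 'S_n, covers (colsub f C) (perm_mx s).

Definition dominance (R : numDomainType) n m (C : 'M[R]_(n, m)) : Prop :=
  columnwise_normal C /\
  (exists f : 'I_n -> 'I_m, covers_perm C f) /\
  (forall f : 'I_n -> 'I_m, covers_perm C f ->
     forall i : 'I_n, \sum_(j < n) colsub f C i j < 2).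

(* Main.v *)
Require Import Defs.
From mathcomp Require Import all_boot all_order all_algebra all_fingroup.
From mathcomp Require Import lra.
Import Order.TTheory GRing.Theory Num.Theory.
Local Open Scope ring_scope.

Lemma sum_sub_le (R : numDomainType) (T : finType) (A B : {set T}) (F : T -> R) :
  A \subset B -> (forall x, 0 <= F x) -> \sum_(x in A) F x <= \sum_(x in B) F x.
Proof.
move=> AB F0; rewrite [X in _ <= X](big_setID A) /=.
rewrite (setIidPr AB).
by rewrite lerDl sumr_ge0.
Qed.

Lemma perm_mx_E (R : pzSemiRingType) n (s : 'S_n) i j :
  (perm_mx s : 'M[R]_n) i j = (s i == j)%:R.
Proof. by rewrite /perm_mx /row_perm !mxE. Qed.

Theorem lemma4p7 (R : realFieldType) (n m p q : nat) (C : 'M[R]_(n, m))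
  (r : 'I_p -> 'I_n) (c : 'I_q -> 'I_m) :
  dominance C -> injective r -> injective c ->
  (forall j : 'I_q, exists i : 'I_p, mxsub r c C i j = 1) ->
  (forall (i : 'I_p) (j1 j2 : 'I_q),
      mxsub r c C i j1 = 1 -> mxsub r c C i j2 = 1 -> j1 = j2) ->
  forall i : 'I_p, \sum_(j < q | mxsub r c C i j != 1) mxsub r c C i j < 1.
Proof.
move=> [[hnorm _] [[f0 [f0inj [s0 hs0]]] hdom]] rinj cinj hcol hrow i.
have C0 : forall x y, 0 <= C x y by move=> x y; case/andP: (hnorm x y).
have C1 : forall x y, C x y <= 1 by move=> x y; case/andP: (hnorm x y).
have {}hcol : forall j, exists i, C (r i) (c j) = 1.
  by move=> j; case: (hcol j) => i'; rewrite mxE => ?; exists i'.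
have {}hrow : forall i j1 j2, C (r i) (c j1) = 1 -> C (r i) (c j2) = 1 -> j1 = j2.
  by move=> i' j1 j2 h1 h2; apply: (hrow i'); rewrite mxE.
under eq_bigl do rewrite mxE.
under eq_bigr do rewrite mxE.
pose Pm (g : {ffun 'I_n -> 'I_m}) := injectiveb g && [forall x, C x (g x) == 1].
pose g0 := [ffun x => f0 (s0 x)].
have Pg0 : Pm g0.
  apply/andP; split.
    apply/injectiveP => x y; rewrite !ffunE => /f0inj /perm_inj //.
  apply/forallP => x; rewrite ffunE; apply/eqP/le_anti; rewrite C1 /=.
  have := hs0 x (s0 x); by rewrite !mxE eqxx subr_ge0.
pose S (g : {ffun 'I_n -> 'I_m}) := [set j : 'I_q | [exists i0 : 'I_p,
   (C (r i0) (c j) == 1) && (g (r i0) == c j)]].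
case: (arg_maxnP (fun g => #|S g|) Pg0) => g /andP [/injectiveP ginj /forallP gC] gmax.
have gC' : forall x, C x (g x) = 1 by move=> x; apply/eqP/gC.
have himg : forall j, exists k, g k = c j.
  move=> j0; case: (boolP (c j0 \in codom g)) => [/codomP [k ->]|nin]; first by exists k.
  exfalso.
  case: (hcol j0) => i0 hi0.
  pose g' := [ffun x => if x == r i0 then c j0 else g x].
  have Pg' : Pm g'.
    apply/andP; split.
      apply/injectiveP => x y; rewrite !ffunE.
      case: eqP => [->|nx]; case: eqP => [->|ny] //.
      - by move=> e; case/codomP: nin; exists y.
      - by move=> e; case/codomP: nin; exists x.
      - exact: ginj.
    apply/forallP => x; rewrite ffunE; case: (x =P r i0) => [->|_]; apply/eqP => //.
  have := gmax g' Pg'; apply/negP; rewrite -ltnNge.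
  apply: proper_card; apply/properP; split.
    apply/subsetP => j; rewrite !inE => /existsP [i1 /andP [/eqP h1 /eqP h2]].
    apply/existsP; exists i1; rewrite h1 eqxx /= ffunE.
    case: (r i1 =P r i0) => [e|_]; last by rewrite h2.
    have ei : i1 = i0 by apply: rinj.
    subst i1; have ej := hrow _ _ _ h1 hi0; subst j.
    by case/codomP: nin; exists (r i0).
  exists j0; rewrite !inE.
    apply/existsP; exists i0. by rewrite hi0 eqxx /g' ffunE eqxx /= eqxx.
  apply/negP => /existsP [i1 /andP [_ /eqP h2]].
  by case/codomP: nin; exists (r i1).
case: (fin_all_exists himg) => kk hkk.
have kkinj : injective kk.
  by move=> j1 j2 e; apply: cinj; rewrite -!hkk e.
have hcp : covers_perm C g.
  split; first exact: ginj.
  exists 1%g => x y; rewrite !mxE perm1.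
  case: eqP => [->|_]; first by rewrite gC' subrr.
  by rewrite subr0.
have hlt : \sum_(k < n) C (r i) (g k) < 2.
  by have := hdom g hcp (r i); under eq_bigr do rewrite mxE.
set x := r i in hlt *.
have hK : \sum_j C x (c j) = \sum_(k in [set kk j | j in [set: 'I_q]]) C x (g k).
  rewrite big_imset /=; last by move=> a b _ _; apply: kkinj.
  by apply: eq_big => [j|j _]; rewrite ?inE ?hkk.
have hall : \sum_(k < n) C x (g k) = \sum_(k in [set: 'I_n]) C x (g k).
  by apply: eq_bigl => k; rewrite inE.
case: (boolP [exists j, C x (c j) == 1]) => [/existsP [j1 /eqP hj1]|hno].
- have e : \sum_j C x (c j) = 1 + \sum_(j | C x (c j) != 1) C x (c j).
    rewrite (bigD1 j1) //= hj1; congr (_ + _); apply: eq_bigl => j.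
    apply/idP/idP.
      by move=> hj; apply/eqP => ej; move/eqP: hj; apply; apply: (hrow i).
    by apply: contraNneq => ->; rewrite hj1.
  have : 1 + \sum_(j | C x (c j) != 1) C x (c j) < 2.
    rewrite -e hK; apply: le_lt_trans hlt; rewrite hall.
    by apply: sum_sub_le => //; apply: subsetT.
  by move=> h; lra.
- have e : \sum_(j | C x (c j) != 1) C x (c j) = \sum_j C x (c j).
    apply: eq_bigl => j; apply/negP => /eqP hj; move/existsP: hno; apply.
    by exists j; rewrite hj.
  have xnot : x \notin [set kk j | j in [set: 'I_q]].
    apply/imsetP => [[j _ ej]]; move/existsP: hno; apply; exists j.
    by rewrite -hkk -ej gC'.
  have : 1 + \sum_(j | C x (c j) != 1) C x (c j) < 2.
    rewrite e hK -[X in X + _](gC' x). rewrite -(@big_setU1 _ _ _ _ x _ (fun k => C x (g k)) xnot) /=; apply: le_lt_trans hlt; rewrite hall.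
    by apply: sum_sub_le => //; apply: subsetT.
  by move=> h; lra.
Qed.
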